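(* Let $\lambda,\xi\in\mathbb{C}$ with $\operatorname{Re}\lambda<0$ and $\operatorname{Re}\xi\ge1$, and let $f(z)=e^{-z+\lambda}+\xi$. Then the imaginary axis $\{z:\operatorname{Re}z=0\}$ does not intersect $I(f)$.
   Context: For an entire function $f$, $f^n$ denotes the $n$-th iterate and $I(f)=\{z\in\mathbb{C}: f^n(z)\to\infty\}$ is its escaping set. *)

(* Defs.v *)
From Stdlib Require Import Reals.
Open Scope R_scope.

Record Cplx := mkC { Re : R; Im : R }.

Definition Cadd (z w : Cplx) : Cplx := mkC (Re z + Re w) (Im z + Im w).
Definition Copp (z : Cplx) : Cplx := mkC (- Re z) (- Im z).
Definition Cabs (z : Cplx) : R := sqrt (Re z ^ 2 + Im z ^ 2).
Definition Cexp (z : Cplx) : Cplx :=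
  mkC (exp (Re z) * cos (Im z)) (exp (Re z) * sin (Im z)).

Definition iterate (f : Cplx -> Cplx) (n : nat) (z : Cplx) : Cplx := Nat.iter n f z.

Definition escaping (f : Cplx -> Cplx) (z : Cplx) : Prop :=
  forall M : R, exists N : nat, forall n : nat, (N <= n)%nat -> M < Cabs (iterate f n z).

Definition fam (lam xi : Cplx) (z : Cplx) : Cplx := Cadd (Cexp (Cadd (Copp z) lam)) xi.

(* Main.v *)
Require Import Defs.
From Stdlib Require Import Reals Lra.
Open Scope R_scope.

Lemma Cabs_bound (a b : R) : sqrt (a ^ 2 + b ^ 2) <= Rabs a + Rabs b.
Proof.
  rewrite <- (sqrt_pow2 (Rabs a + Rabs b)) by (pose proof (Rabs_pos a); pose proof (Rabs_pos b); lra).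
  apply sqrt_le_1_alt.
  rewrite <- (pow2_abs a), <- (pow2_abs b).
  pose proof (Rabs_pos a); pose proof (Rabs_pos b). nra.
Qed.

Theorem lemma2 (lam xi : Cplx) (hlam : Re lam < 0) (hxi : 1 <= Re xi) :
  forall z : Cplx, Re z = 0 -> ~ escaping (fam lam xi) z.
Proof.
  intros z hz hesc.
  set (Bd := Cabs z + 2 + Rabs (Re xi) + Rabs (Im xi)).
  assert (Hinv : forall n, 0 <= Re (iterate (fam lam xi) n z) /\ Cabs (iterate (fam lam xi) n z) <= Bd).
  { induction n as [|n [IH1 IH2]].
    - simpl. split; [lra|]. unfold Bd. pose proof (Rabs_pos (Re xi)); pose proof (Rabs_pos (Im xi)). lra.
    - change (iterate (fam lam xi) (S n) z) with (fam lam xi (iterate (fam lam xi) n z)).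
      set (w := iterate (fam lam xi) n z) in *.
      unfold fam, Cadd, Cexp, Copp; simpl.
      set (s := - Re w + Re lam).
      set (t := - Im w + Im lam).
      assert (hs : exp s < 1).
      { rewrite <- exp_0. apply exp_increasing. unfold s. lra. }
      pose proof (exp_pos s).
      pose proof (COS_bound t).
      pose proof (SIN_bound t).
      split.
      + assert (exp s * cos t >= - exp s) by nra. lra.
      + unfold Cabs; simpl.
        eapply Rle_trans; [apply Cabs_bound|].
        assert (Rabs (exp s * cos t) <= 1).
        { rewrite Rabs_mult, (Rabs_right (exp s)) by lra.
          pose proof (Rabs_pos (cos t)).
          assert (Rabs (cos t) <= 1) by (apply Rabs_le; lra). nra. }
        assert (Rabs (exp s * sin t) <= 1).
        { rewrite Rabs_mult, (Rabs_right (exp s)) by lra.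
          pose proof (Rabs_pos (sin t)).
          assert (Rabs (sin t) <= 1) by (apply Rabs_le; lra). nra. }
        pose proof (Rabs_triang (exp s * cos t) (Re xi)).
        pose proof (Rabs_triang (exp s * sin t) (Im xi)).
        assert (0 <= Cabs z) by (unfold Cabs; apply sqrt_pos).
        unfold Bd. lra. }
  destruct (hesc Bd) as [N HN].
  specialize (HN N (le_n N)). destruct (Hinv N). lra.
Qed.
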